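(* Assume $\mu_n\to0$ and $n^{1/2}\mu_n\to\infty$, and suppose $\theta_n\in\mathbb R$ satisfies $\theta_n/\mu_n\to\zeta\in\mathbb R\cup\{-\infty,\infty\}$. 1. If $\zeta=0$ and $n^{1/2}\theta_n\to\nu\in\mathbb R$, then $F_{A,n,\theta_n}$ converges weakly to the cdf $\mathbf 1(\cdot\ge-\nu)$ (pointmass at $-\nu$). 2. If $-\infty<\zeta<0$, or if $\zeta=0$ and $n^{1/2}\theta_n\to-\infty$, or if $\zeta=-\infty$ and $n^{1/2}\mu_n^2/\theta_n\to-\infty$, then $F_{A,n,\theta_n}(x)\to0$ for every $x\in\mathbb R$. If $0<\zeta<\infty$, or if $\zeta=0$ and $n^{1/2}\theta_n\to\infty$, or if $\zeta=\infty$ and $n^{1/2}\mu_n^2/\theta_n\to\infty$, then $F_{A,n,\theta_n}(x)\to1$ for every $x\in\mathbb R$. 3. If $|\zeta|=\infty$ and $n^{1/2}\mu_n^2/\theta_n\to r\in\mathbb R$, then $F_{A,n,\theta_n}$ converges weakly to the cdf $\Phi(\cdot+r)$.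
   Context: Gaussian location model: for each sample size $n$, $y_1,\dots,y_n$ are i.i.d. $N(\theta,1)$ with $\theta\in\mathbb R$ unknown; $\bar y$ is their mean. $P_{n,\theta}$ denotes the probability governing a sample of size $n$ when $\theta$ is the true parameter. Given a nonrandom tuning parameter $\mu_n>0$, the adaptive LASSO estimator is $\hat\theta_A=0$ if $|\bar y|\le\mu_n$ and $\hat\theta_A=\bar y-\mu_n^2/\bar y$ if $|\bar y|>\mu_n$. $F_{A,n,\theta}$ denotes the cdf of $n^{1/2}(\hat\theta_A-\theta)$ under $P_{n,\theta}$. $\Phi$ is the standard normal cdf. *)

(* Defs.v *)
From Stdlib Require Import Reals Lra ClassicalEpsilon.
Open Scope R_scope.

Definition phi (z : R) : R := exp (- z ^ 2 / 2) / sqrt (2 * PI).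

Definition improper_integral (f : R -> R) (L : R) : Prop :=
  forall eps, 0 < eps -> exists A, forall a b, a <= - A -> A <= b ->
    exists pr : Riemann_integrable f a b, Rabs (RiemannInt pr - L) < eps.

Definition gauss_prob (P : R -> bool) : R :=
  epsilon (inhabits 0)
    (fun L => improper_integral (fun z => if P z then phi z else 0) L).

Definition Rle_b (x y : R) : bool := if Rle_dec x y then true else false.

Definition Phi (x : R) : R := gauss_prob (fun z => Rle_b z x).

Definition adaptive_lasso (m ybar : R) : R :=
  if Rle_dec (Rabs ybar) m then 0 else ybar - m ^ 2 / ybar.

(* F_{A,n,theta}(x) = P_{n,theta}( sqrt n (thetaA - theta) <= x ), with
   tuning parameter mun.  Under P_{n,theta}, ybar = theta + Z / sqrt n with
   Z ~ N(0,1). *)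
Definition F_A (n : nat) (mun theta x : R) : R :=
  gauss_prob (fun z =>
    Rle_b (sqrt (INR n) * (adaptive_lasso mun (theta + z / sqrt (INR n)) - theta)) x).

Definition weak_conv (F : nat -> R -> R) (G : R -> R) : Prop :=
  forall x, continuity_pt G x -> Un_cv (fun n => F n x) (G x).

(* Main.v *)
Require Import Defs.
From Stdlib Require Import Reals Lra Lia ClassicalEpsilon FunctionalExtensionality.
From mathcomp Require all_boot all_order all_algebra.
From mathcomp Require all_classical all_reals all_analysis.
From mathcomp Require Rstruct Rstruct_topology.
From Coquelicot Require Coquelicot.
Open Scope R_scope.

Module MC.
Import all_boot all_order all_algebra.
Import all_classical all_reals all_analysis.
Import Rstruct Rstruct_topology.
Import Order.TTheory GRing.Theory Num.Theory.
Import numFieldNormedType.Exports.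
Local Open Scope classical_set_scope.
Local Open Scope ring_scope.

Lemma RcosE (x : R) : Rtrigo_def.cos x = cos x.
Proof.
apply/esym; rewrite /Rtrigo_def.cos; case: exist_cos => y.
rewrite /cos_in /infinite_sum /= => cos_ub.
apply: (cvg_unique (@Rhausdorff _) (@cvg_cos_coeff' _ x)).
rewrite /mkset -cvg_shiftS /=; apply/(@cvgrPdist_lt _ R^o) => /= e /RltP /cos_ub[N Nub].
  near=> n.
  have nN : (n >= N)%coq_nat by apply/ssrnat.leP; near: n; exact: nbhs_infty_ge.
  move: Nub => /(_ _ nN) /[!RdistE] /RltP /=.
  rewrite distrC sum_f_R0E; congr (`| _ - _ | < e).
  apply: eq_bigr=> k _; rewrite /cos_coeff' /cos_n RdivE RpowE RpowE factE INRE.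
  rewrite -exprnP /Rsqr !RmultE -expr2 -exprM.
  have -> : (2 * k)%coq_nat = k.*2 by rewrite -mul2n.
  by rewrite mulnC muln2 mulrAC.
Unshelve. all: by end_near. Qed.

Lemma R2E : IZR 2 = 2%:R.
Proof. by rewrite IZRposE INRE. Qed.

Lemma RpiE : PI = pi.
Proof.
have h : PI / 2 = pi / 2.
  apply: cos_02_uniq.
  - have h1 := PI2_1; have h2 := PI_4.
    apply/andP; split; apply/RleP; rewrite -?RdivE -?R2E -?R0E; lra.
  - by rewrite -RcosE -RdivE cos_PI2.
  - by case: (@pihalf_02_cos_pihalf R).
  - exact: cos_pihalf.
by have := h; rewrite -!RdivE -!R2E => h'; lra.
Qed.

Lemma deriv_bridge_cvg (f : R -> R) x l : derivable_pt_lim f x l ->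
  (fun h : R => h^-1 * (f (h + x) - f x)) @ (0:R)^' --> l.
Proof.
move=> dl.
pose q (h : R) := if h == 0 then l else h^-1 * (f (h + x) - f x).
have cq : continuity_pt q 0.
  move=> e /dl [d hd]; exists (pos d); split; first exact: cond_pos.
  move=> h [[_ h0] hlt].
  have h0' : h <> 0 by move=> hh; apply: h0; rewrite hh.
  rewrite /q /= (negbTE (introN eqP h0')) eqxx.
  change (Rlt (Rdist h 0) d) in hlt; rewrite RdistE subr0 -RabsE in hlt.
  have key : ((f (x + h) - f x) / h)%coqR = h^-1 * (f (h + x) - f x).
    by rewrite (Rplus_comm x h) /Rdiv Rmult_comm.
  by rewrite -key; apply: hd.
have := (continuity_pt_cvg' q 0).1 cq.
rewrite {2}/q eqxx; apply: cvg_trans; apply: near_eq_cvg.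
near=> h; rewrite /q ifF //; apply/negbTE; near: h.
exact: nbhs_dnbhs_neq.
Unshelve. all: by end_near. Qed.

Definition RR : realType := R.
Lemma deriv_bridge (f : RR -> RR) (x l : RR) : derivable_pt_lim f x l ->
  derivable f x 1 /\ derive1 f x = l.
Proof.
move=> /deriv_bridge_cvg H.
have H' : (fun h : RR => h^-1 *: ((f \o shift x) (h *: 1) - f x)) @ (0:RR)^' --> l.
  move: H; apply: cvg_trans; apply: near_eq_cvg; near=> h; by rewrite /= /shift /= [h%:A]mulr1.
split; first exact: (cvgP _ H').
by rewrite /derive1; apply: cvg_lim.
Unshelve. all: by end_near. Qed.

Lemma gauss_funE (x : RR) : gauss_fun x = exp (- (x ^ 2))%coqR.
Proof. by rewrite /gauss_fun RexpE RpowE RoppE. Qed.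

Lemma ftc_gauss (F : RR -> RR) (b : RR) :
  (forall x, derivable_pt_lim F x (exp (- (x ^ 2)))%coqR) -> 0 < b ->
  gauss_integral_proof.integral0_gauss b = F b - F 0.
Proof.
move=> dF b0.
have cF x : {for x, continuous F}.
  apply/continuity_pt_cvg; apply: derivable_continuous_pt.
  by exists (exp (- (x ^ 2)))%coqR; apply: dF.
have := @continuous_FTC2 RR gauss_fun F 0 b b0.
rewrite /gauss_integral_proof.integral0_gauss /Rintegral => ->.
- by rewrite -EFinB.
- by apply: continuous_subspaceT; exact: continuous_gauss_fun.
- split.
  + by move=> x _; have [] := (@deriv_bridge F x _ (dF x)).
  + exact/cvg_at_right_filter/cF.
  + exact/cvg_at_left_filter/cF.
- by move=> x _; have [_ ->] := (@deriv_bridge F x _ (dF x)); rewrite gauss_funE.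
Qed.

Lemma gauss_lim (F : RR -> RR) :
  (forall x, derivable_pt_lim F x (exp (- (x ^ 2)))%coqR) -> F 0 = 0 ->
  forall eps, (0 < eps)%coqR -> exists M, forall x, (M <= x)%coqR ->
    (Rabs (F x - sqrt PI / 2) < eps)%coqR.
Proof.
move=> dF F0 eps /RltP e0.
have h1 : F x @[x --> +oo] --> Num.sqrt pi / 2.
  have : Num.sqrt (@gauss_integral_proof.integral0_gauss RR x ^+ 2) @[x --> +oo]
      --> Num.sqrt (pi / 4).
    apply: continuous_cvg => //;
      [exact: sqrt_continuous|exact: gauss_integral_proof.cvg_integral0_gauss_sqr].
  rewrite sqrtrM ?pi_ge0// sqrtrV// (_ : 4 = 2 ^+ 2); last first.
    by rewrite expr2 -natrM.
  rewrite sqrtr_sqr ger0_norm//.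
  apply: cvg_trans; apply: near_eq_cvg; near=> x.
  rewrite sqrtr_sqr ger0_norm; last exact: gauss_integral_proof.integral0_gauss_ge0.
  rewrite (@ftc_gauss F) // ?F0 ?subr0 //.

move/cvgrPdist_lt : h1 => /(_ _ e0).
case=> M [_ HM].
exists (M + 1)%coqR => x Mx.
have /HM : M < x by apply/RltP; lra.
rewrite distrC -RminusE -RabsE -RpiE -RsqrtE -R2E -RdivE => /RltP //.
Unshelve. all: by end_near. Qed.


Lemma gauss_lim_std (F : R -> R) :
  (forall x, derivable_pt_lim F x (exp (- (x ^ 2)))%coqR) -> F 0%coqR = 0%coqR ->
  forall eps, (0 < eps)%coqR -> exists M, forall x, (M <= x)%coqR ->
    (Rabs (F x - sqrt PI / 2) < eps)%coqR.
Proof. exact: gauss_lim. Qed.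
End MC.

Module ST.
Import Coquelicot.Coquelicot.
Open Scope R_scope.

Lemma gauss_lim (F : R -> R) :
  (forall x, derivable_pt_lim F x (exp (- (x ^ 2)))) -> F 0 = 0 ->
  forall eps, 0 < eps -> exists M, forall x, M <= x ->
    Rabs (F x - sqrt PI / 2) < eps.
Proof. exact (MC.gauss_lim_std F). Qed.

Lemma sqrt2PI_pos : 0 < sqrt (2 * PI).
Proof. apply sqrt_lt_R0; generalize PI_RGT_0; lra. Qed.

Lemma phi_pos z : 0 < phi z.
Proof. unfold phi, Rdiv; apply Rmult_lt_0_compat; [apply exp_pos|apply Rinv_0_lt_compat, sqrt2PI_pos]. Qed.

Lemma phi_deriv z : ex_derive phi z.
Proof.
  unfold phi. auto_derive. auto.
Qed.

Lemma phi_cont z : continuous phi z.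
Proof. apply (ex_derive_continuous (K:=R_AbsRing) (V:=R_NormedModule)), phi_deriv. Qed.

Lemma phi_exRInt a b : ex_RInt phi a b.
Proof. apply (ex_RInt_continuous (V:=R_CompleteNormedModule)); intros; apply phi_cont. Qed.

Definition Pphi (x : R) : R := RInt phi 0 x.

Lemma Pphi_deriv x : is_derive Pphi x (phi x).
Proof.
  apply is_derive_RInt with 0.
  - apply filter_forall; intro b. apply (RInt_correct (V:=R_CompleteNormedModule)), phi_exRInt.
  - apply phi_cont.
Qed.

Lemma Pphi_0 : Pphi 0 = 0.
Proof. unfold Pphi; rewrite RInt_point; reflexivity. Qed.

Lemma Pphi_sub a b : Pphi b - Pphi a = RInt phi a b.
Proof.
  unfold Pphi. rewrite <- (RInt_Chasles phi 0 a b) by apply phi_exRInt.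
  unfold plus; simpl; ring.
Qed.

Lemma Pphi_incr a b : a <= b -> Pphi a <= Pphi b.
Proof.
  intro hab. assert (0 <= RInt phi a b).
  { apply RInt_ge_0; auto. apply phi_exRInt. intros; left; apply phi_pos. }
  rewrite <- Pphi_sub in H; lra.
Qed.

Lemma sqrtPI_pos : 0 < sqrt PI.
Proof. apply sqrt_lt_R0, PI_RGT_0. Qed.

Lemma sqrt2_pos : 0 < sqrt 2.
Proof. apply sqrt_lt_R0; lra. Qed.

Lemma Pphi_lim (s : R) : s * s = 1 ->
  forall eps, 0 < eps -> exists M, forall y, M <= y ->
    Rabs (s * Pphi (s * y) - 1 / 2) < eps.
Proof.
  intros hs eps heps.
  set (c := s * sqrt 2).
  set (F := fun x => s * sqrt PI * Pphi (c * x)).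
  assert (hF : forall x, derivable_pt_lim F x (exp (- (x ^ 2)))).
  { intro x. apply is_derive_Reals.
    assert (Hl : is_derive (fun x => c * x) x c).
    { auto_derive; auto; ring. }
    assert (H1 := is_derive_comp Pphi (fun x => c * x) x _ _ (Pphi_deriv _) Hl).
    assert (H2 := is_derive_scal _ x (s * sqrt PI) _ H1).
    replace (exp (- x ^ 2)) with (s * sqrt PI * scal c (phi (c * x))); [exact H2|].
    unfold scal; simpl; unfold mult; simpl. unfold phi, c.
    rewrite sqrt_mult by (generalize PI_RGT_0; lra).
    replace (- (s * sqrt 2 * x) ^ 2 / 2) with (- x ^ 2).
    2:{ replace ((s * sqrt 2 * x) ^ 2) with ((s*s) * (sqrt 2 * sqrt 2) * x ^ 2) by ring.
        rewrite hs, sqrt_sqrt by lra. field. }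
    field_simplify_eq. 2: split; apply Rgt_not_eq; [apply sqrtPI_pos|apply sqrt2_pos].
    replace (x * (x * 1)) with (x ^ 2) by ring. replace (s ^ 2) with (s * s) by ring.
    rewrite hs; ring. }
  assert (hF0 : F 0 = 0) by (unfold F; rewrite Rmult_0_r, Pphi_0; ring).
  destruct (gauss_lim F hF hF0 (eps * sqrt PI)) as [M HM].
  { apply Rmult_lt_0_compat; [lra|apply sqrtPI_pos]. }
  exists (sqrt 2 * Rabs M). intros y hy.
  assert (hx : M <= y / sqrt 2).
  { apply Rle_trans with (Rabs M); [apply Rle_abs|].
    apply Rmult_le_reg_l with (sqrt 2); [apply sqrt2_pos|].
    replace (sqrt 2 * (y / sqrt 2)) with y; [lra|field; apply Rgt_not_eq, sqrt2_pos]. }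
  specialize (HM _ hx). unfold F, c in HM.
  replace (s * sqrt 2 * (y / sqrt 2)) with (s * y) in HM by (field; apply Rgt_not_eq, sqrt2_pos).
  replace (s * sqrt PI * Pphi (s * y) - sqrt PI / 2) with (sqrt PI * (s * Pphi (s * y) - 1 / 2)) in HM by field.
  rewrite Rabs_mult, (Rabs_right (sqrt PI)) in HM by (left; apply sqrtPI_pos).
  apply Rmult_lt_reg_l with (sqrt PI); [apply sqrtPI_pos|]. lra.
Qed.

Definition fc (c : R) (z : R) : R := if Rle_b z c then phi z else 0.

Lemma fc_RInt a b c : a < c < b ->
  ex_RInt (fc c) a b /\ RInt (fc c) a b = Pphi c - Pphi a.
Proof.
  intros [hac hcb].
  assert (E1 : forall x, Rmin a c < x < Rmax a c -> phi x = fc c x).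
  { intros x hx. rewrite Rmin_left, Rmax_right in hx by lra.
    unfold fc, Rle_b. destruct (Rle_dec x c); [reflexivity|lra]. }
  assert (E2 : forall x, Rmin c b < x < Rmax c b -> (fun _ => 0) x = fc c x).
  { intros x hx. rewrite Rmin_left, Rmax_right in hx by lra.
    unfold fc, Rle_b. destruct (Rle_dec x c); [lra|reflexivity]. }
  assert (X1 : ex_RInt (fc c) a c).
  { apply (ex_RInt_ext (V:=R_NormedModule) phi); [exact E1|apply phi_exRInt]. }
  assert (X2 : ex_RInt (fc c) c b).
  { apply (ex_RInt_ext (V:=R_NormedModule) (fun _ => 0)); [exact E2|apply ex_RInt_const]. }
  split.
  - apply (ex_RInt_Chasles (V:=R_NormedModule)) with c; assumption.
  - rewrite <- (RInt_Chasles (V:=R_CompleteNormedModule) (fc c) a c b X1 X2).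
    rewrite <- (RInt_ext (V:=R_CompleteNormedModule) _ _ _ _ E1).
    rewrite <- (RInt_ext (V:=R_CompleteNormedModule) _ _ _ _ E2).
    rewrite RInt_const, Pphi_sub. unfold plus, scal; simpl; unfold mult; simpl. ring.
Qed.

Lemma improper_fc c : improper_integral (fc c) (Pphi c + 1 / 2).
Proof.
  intros eps heps.
  destruct (Pphi_lim (-1) ltac:(ring) eps heps) as [M HM].
  exists (Rmax (Rabs c + 1) M). intros a b ha hb.
  assert (hc1 := Rmax_l (Rabs c + 1) M). assert (hc2 := Rmax_r (Rabs c + 1) M).
  assert (hc3 := Rle_abs c). assert (hc4 := Rle_abs (- c)). rewrite Rabs_Ropp in hc4.
  destruct (fc_RInt a b c) as [X V]; [lra|].
  exists (ex_RInt_Reals_0 _ _ _ X).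
  rewrite <- RInt_Reals, V.
  specialize (HM (- a) ltac:(lra)).
  replace (-1 * Pphi (-1 * - a) - 1 / 2) with (- (Pphi a + 1/2)) in HM
    by (replace (-1 * - a) with a by ring; ring).
  rewrite Rabs_Ropp in HM.
  replace (Pphi c - Pphi a - (Pphi c + 1 / 2)) with (- (Pphi a + 1/2)) by ring.
  rewrite Rabs_Ropp; exact HM.
Qed.

Lemma improper_unique f L1 L2 :
  improper_integral f L1 -> improper_integral f L2 -> L1 = L2.
Proof.
  intros H1 H2. destruct (Req_dec L1 L2) as [|hne]; [assumption|exfalso].
  set (e := Rabs (L1 - L2) / 2).
  assert (he : 0 < e) by (unfold e; assert (0 < Rabs (L1 - L2)) by (apply Rabs_pos_lt; intro; apply hne; lra); lra).
  destruct (H1 e he) as [A1 HA1]. destruct (H2 e he) as [A2 HA2].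
  remember (Rmax A1 A2) as A.
  assert (h1 := Rmax_l A1 A2). assert (h2 := Rmax_r A1 A2). rewrite <- HeqA in h1, h2.
  destruct (HA1 (- A) A ltac:(lra) ltac:(lra)) as [p1 hp1].
  destruct (HA2 (- A) A ltac:(lra) ltac:(lra)) as [p2 hp2].
  rewrite (RiemannInt_P5 p2 p1) in hp2.
  assert (Rabs (L1 - L2) <= Rabs (RiemannInt p1 - L1) + Rabs (RiemannInt p1 - L2)).
  { replace (L1 - L2) with (- (RiemannInt p1 - L1) + (RiemannInt p1 - L2)) by ring.
    rewrite <- (Rabs_Ropp (RiemannInt p1 - L1)). apply Rabs_triang. }
  unfold e in *. lra.
Qed.

Lemma Phi_eq c : Phi c = Pphi c + 1 / 2.
Proof.
  unfold Phi, gauss_prob.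
  apply improper_unique with (fun z => if Rle_b z c then phi z else 0).
  - apply epsilon_spec. exists (Pphi c + 1/2). apply improper_fc.
  - apply improper_fc.
Qed.

Lemma Phi_fun : Phi = fun x => Pphi x + 1 / 2.
Proof. apply functional_extensionality; intro; apply Phi_eq. Qed.

Lemma Phi_cont l : continuity_pt Phi l.
Proof.
  rewrite Phi_fun. apply derivable_continuous_pt.
  exists (phi l). apply is_derive_Reals.
  pose proof (is_derive_plus (K:=R_AbsRing) (V:=R_NormedModule) Pphi (fun _ => 1/2) l (phi l) 0
    (Pphi_deriv l) (is_derive_const _ _)) as H.
  replace (phi l) with (plus (phi l) 0) by (unfold plus; simpl; ring).
  exact H.
Qed.

Lemma Phi_cv u l : Un_cv u l -> Un_cv (fun n => Phi (u n)) (Phi l).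
Proof. intro H; apply continuity_seq; [apply Phi_cont|exact H]. Qed.

Lemma Phi_to1 u : cv_infty u -> Un_cv (fun n => Phi (u n)) 1.
Proof.
  intros H eps heps.
  destruct (Pphi_lim 1 ltac:(ring) eps heps) as [M HM].
  destruct (H M) as [N HN]. exists N; intros n hn.
  specialize (HM (u n) (Rlt_le _ _ (HN n hn))).
  rewrite !Rmult_1_l in HM. unfold R_dist. rewrite Phi_eq.
  replace (Pphi (u n) + 1 / 2 - 1) with (Pphi (u n) - 1/2) by field. exact HM.
Qed.

Lemma Phi_to0 u : cv_infty (fun n => - u n) -> Un_cv (fun n => Phi (u n)) 0.
Proof.
  intros H eps heps.
  destruct (Pphi_lim (-1) ltac:(ring) eps heps) as [M HM].
  destruct (H M) as [N HN]. exists N; intros n hn.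
  specialize (HM (- u n) (Rlt_le _ _ (HN n hn))).
  replace (-1 * - u n) with (u n) in HM by ring.
  unfold R_dist. rewrite Phi_eq.
  replace (Pphi (u n) + 1 / 2 - 0) with (- (-1 * Pphi (u n) - 1/2)) by ring.
  rewrite Rabs_Ropp. exact HM.
Qed.

Definition dd (r : R) : R := (sqrt (r * r + 4) + Rabs r) / 2.
Definition YY (r : R) : R := if Rle_dec 0 r then r + / dd r else r - / dd r.
Definition cval (sg r x : R) : R := if Rle_dec 0 r then x + sg / dd r else x - sg / dd r.

Lemma S_facts r : let S := sqrt (r * r + 4) in
  S * S = r * r + 4 /\ 0 <= S /\ Rabs r < S /\ 2 <= S /\ S <= Rabs r + 2.
Proof.
  intro S. assert (h0 : 0 <= r * r + 4) by nra.
  assert (hSS : S * S = r * r + 4) by (apply sqrt_sqrt; exact h0).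
  assert (hS0 : 0 <= S) by apply sqrt_pos.
  assert (ha : Rabs r * Rabs r = r * r) by (rewrite <- Rabs_mult; apply Rabs_right; nra).
  assert (ha0 := Rabs_pos r).
  split; [exact hSS|split; [exact hS0|]].
  split; [nra|split; nra].
Qed.

Lemma dd_facts r : 1 <= dd r /\ Rabs r <= dd r /\ dd r <= Rabs r + 1 /\
  / dd r = (sqrt (r * r + 4) - Rabs r) / 2.
Proof.
  destruct (S_facts r) as (hSS & hS0 & h1 & h2 & h3).
  assert (ha : Rabs r * Rabs r = r * r) by (rewrite <- Rabs_mult; apply Rabs_right; nra).
  assert (ha0 := Rabs_pos r).
  unfold dd. split; [lra|split; [lra|split; [lra|]]].
  field_simplify_eq; [nra|lra].
Qed.

Lemma al_equiv m r y : 0 < m ->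
  (adaptive_lasso m y <= m * r <-> y <= m * YY r).
Proof.
  intro hm. destruct (S_facts r) as (hSS & hS0 & h1 & h2 & h3).
  destruct (dd_facts r) as (_ & _ & _ & hinv).
  set (S := sqrt (r * r + 4)) in *.
  assert (hYp : 0 <= r -> YY r = (r + S) / 2).
  { intro hr. unfold YY. destruct (Rle_dec 0 r); [|lra]. rewrite hinv, Rabs_right by lra. fold S; field. }
  assert (hYn : r < 0 -> YY r = (r - S) / 2).
  { intro hr. unfold YY. destruct (Rle_dec 0 r); [lra|]. rewrite hinv, Rabs_left by lra. fold S; field. }
  assert (hra := Rle_abs r). assert (hrb := Rle_abs (- r)). rewrite Rabs_Ropp in hrb.
  unfold adaptive_lasso. destruct (Rle_dec (Rabs y) m) as [hy|hy].
  - assert (hy1 := Rle_abs y); assert (hy2 := Rle_abs (-y)); rewrite Rabs_Ropp in hy2. destruct (Rle_dec 0 r) as [hr|hr].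
    + rewrite hYp by lra. split; intro; nra.
    + rewrite hYn by lra. split; intro; nra.
  - apply Rnot_le_lt in hy.
    destruct (Rlt_or_le 0 y) as [hy0|hy0].
    + rewrite Rabs_right in hy by lra.
      assert (E : y - m ^ 2 / y <= m * r <-> y * y - m * m - m * r * y <= 0).
      { split; intro H.
        - apply Rmult_le_compat_r with (r := y) in H; [|lra].
          replace ((y - m ^ 2 / y) * y) with (y * y - m * m) in H by (field; lra). nra.
        - apply Rmult_le_reg_r with y; [lra|].
          replace ((y - m ^ 2 / y) * y) with (y * y - m * m) by (field; lra). nra. }
      rewrite E. destruct (Rle_dec 0 r) as [hr|hr].
      * rewrite hYp by lra.
        assert (F : y * y - m * m - m * r * y = (y - m * ((r + S) / 2)) * (y - m * ((r - S) / 2))).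
        { field_simplify. replace (S ^ 2) with (S * S) by ring. rewrite hSS. field. }
        rewrite F. split; intro H.
        -- assert (y - m * ((r - S) / 2) > 0) by nra. nra.
        -- assert (y - m * ((r - S) / 2) > 0) by nra. nra.
      * rewrite hYn by lra.
        assert (Q1 : m * r < 0) by nra. assert (Q2 : m * r * y < 0) by nra. assert (Q3 : m * m < y * y) by nra.
        assert (Q4 : m * ((r - S) / 2) < 0) by nra.
        split; intro HH; lra.
    + rewrite Rabs_left1 in hy by lra.
      assert (E : y - m ^ 2 / y <= m * r <-> y * y - m * m - m * r * y >= 0).
      { split; intro H.
        - apply Rmult_le_compat_neg_l with (r := y) in H; [|lra].
          replace (y * (y - m ^ 2 / y)) with (y * y - m * m) in H by (field; lra). nra.
        - apply Rmult_le_reg_l with (- y); [lra|].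
          replace (- y * (y - m ^ 2 / y)) with (- (y * y - m * m)) by (field; lra). nra. }
      rewrite E. destruct (Rle_dec 0 r) as [hr|hr].
      * rewrite hYp by lra.
        assert (Q1 : 0 <= m * r) by nra. assert (Q2 : m * r * y <= 0) by nra. assert (Q3 : m * m < y * y) by nra.
        assert (Q4 : 0 < m * ((r + S) / 2)) by nra.
        split; intro HH; lra.
      * rewrite hYn by lra.
        assert (F : y * y - m * m - m * r * y = (y - m * ((r - S) / 2)) * (y - m * ((r + S) / 2))).
        { field_simplify. replace (S ^ 2) with (S * S) by ring. rewrite hSS. field. }
        rewrite F. split; intro H.
        -- assert (y - m * ((r + S) / 2) < 0) by nra. nra.
        -- assert (y - m * ((r + S) / 2) < 0) by nra. nra.
Qed.

Lemma event_eq s m th x z : 0 < s -> 0 < m ->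
  Rle_b (s * (adaptive_lasso m (th + z / s) - th)) x =
  Rle_b z (cval (s * m) (th / m + x / (s * m)) x).
Proof.
  intros hs hm. set (r := th / m + x / (s * m)).
  assert (hr : m * r = th + x / s) by (unfold r; field; lra).
  assert (hd : dd r > 0) by (destruct (dd_facts r); lra).
  assert (hc : cval (s * m) r x = s * (m * YY r - th)).
  { unfold cval, YY. destruct (Rle_dec 0 r).
    - replace (s * (m * (r + / dd r) - th)) with (s * (m * r - th) + s * m / dd r) by (field; lra).
      rewrite hr. field; lra.
    - replace (s * (m * (r - / dd r) - th)) with (s * (m * r - th) - s * m / dd r) by (field; lra).
      rewrite hr. field; lra. }
  rewrite hc.
  assert (E1 : s * (adaptive_lasso m (th + z / s) - th) <= x <-> adaptive_lasso m (th + z / s) <= m * r).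
  { rewrite hr. split; intro H.
    - apply Rmult_le_reg_l with s; [lra|]. replace (s * (th + x / s)) with (s * th + x) by (field; lra). lra.
    - apply Rmult_le_compat_l with (r := s) in H; [|lra].
      replace (s * (th + x / s)) with (s * th + x) in H by (field; lra). lra. }
  assert (E2 : th + z / s <= m * YY r <-> z <= s * (m * YY r - th)).
  { split; intro H.
    - apply Rmult_le_compat_l with (r := s) in H; [|lra].
      replace (s * (th + z / s)) with (s * th + z) in H by (field; lra). lra.
    - apply Rmult_le_reg_l with s; [lra|]. replace (s * (th + z / s)) with (s * th + z) by (field; lra). lra. }
  pose proof (al_equiv m r (th + z / s) hm) as E3.
  unfold Rle_b. destruct (Rle_dec _ x) as [h1|h1]; destruct (Rle_dec z _) as [h2|h2]; try reflexivity.
  - exfalso; apply h2, E2, E3, E1, h1.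
  - exfalso; apply h1, E1, E3, E2, h2.
Qed.

Lemma sqrtn_pos n : (1 <= n)%nat -> 0 < sqrt (INR n).
Proof. intro h; apply sqrt_lt_R0, lt_0_INR; lia. Qed.

Lemma F_A_eq n m th x : (1 <= n)%nat -> 0 < m ->
  F_A n m th x = Phi (cval (sqrt (INR n) * m) (th / m + x / (sqrt (INR n) * m)) x).
Proof.
  intros hn hm. unfold F_A, Phi. f_equal. apply functional_extensionality; intro z.
  apply event_eq; [apply sqrtn_pos; exact hn|exact hm].
Qed.

Definition ev (P : nat -> Prop) := exists N, forall n, (N <= n)%nat -> P n.

Lemma ev_and P Q : ev P -> ev Q -> ev (fun n => P n /\ Q n).
Proof.
  intros [N1 H1] [N2 H2]. exists (N1 + N2)%nat; intros n hn; split; [apply H1|apply H2]; lia.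
Qed.

Lemma ev_impl (P Q : nat -> Prop) : ev P -> (forall n, P n -> Q n) -> ev Q.
Proof. intros [N H] HPQ; exists N; intros n hn; apply HPQ, H, hn. Qed.

Lemma ev_ge1 : ev (fun n => (1 <= n)%nat).
Proof. exists 1%nat; intros; lia. Qed.

Lemma cv_lt u l a : Un_cv u l -> l < a -> ev (fun n => u n < a).
Proof.
  intros H hl. destruct (H (a - l) ltac:(lra)) as [N HN]. exists N; intros n hn.
  specialize (HN n hn). unfold R_dist in HN. assert (h := Rle_abs (u n - l)). lra.
Qed.

Lemma cv_gt u l a : Un_cv u l -> a < l -> ev (fun n => a < u n).
Proof.
  intros H hl. destruct (H (l - a) ltac:(lra)) as [N HN]. exists N; intros n hn.
  specialize (HN n hn). unfold R_dist in HN. assert (h := Rle_abs (- (u n - l))).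
  rewrite Rabs_Ropp in h. lra.
Qed.

Lemma cv_abs_le u l : Un_cv u l -> ev (fun n => Rabs (u n) <= Rabs l + 1).
Proof.
  intros H. destruct (H 1 ltac:(lra)) as [N HN]. exists N; intros n hn.
  specialize (HN n hn). unfold R_dist in HN.
  replace (u n) with ((u n - l) + l) by ring.
  assert (h := Rabs_triang (u n - l) l). lra.
Qed.

Lemma cvinf_gt u M : cv_infty u -> ev (fun n => M < u n).
Proof. intros H. destruct (H M) as [N HN]. exists N; intros n hn; apply HN; lia. Qed.

Lemma cvinf_mono u v : cv_infty u -> ev (fun n => u n <= v n) -> cv_infty v.
Proof.
  intros H [N1 H1] M. destruct (H M) as [N2 H2]. exists (N1 + N2)%nat; intros n hn.
  apply Rlt_le_trans with (u n); [apply H2; lia|apply H1; lia].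
Qed.

Lemma cvinf_scale u k : cv_infty u -> 0 < k -> cv_infty (fun n => k * u n).
Proof.
  intros H hk M. destruct (H (M / k)) as [N HN]. exists N; intros n hn.
  specialize (HN n hn). apply Rmult_lt_compat_l with (r := k) in HN; [|exact hk].
  replace (k * (M / k)) with M in HN by (field; lra). exact HN.
Qed.

Lemma cvinf_shift u a : cv_infty u -> cv_infty (fun n => u n + a).
Proof.
  intros H M. destruct (H (M - a)) as [N HN]. exists N; intros n hn.
  specialize (HN n hn). lra.
Qed.

Lemma Un_cv_ev u v l : Un_cv u l -> ev (fun n => u n = v n) -> Un_cv v l.
Proof.
  intros H [N1 H1] eps heps. destruct (H eps heps) as [N2 H2].
  exists (N1 + N2)%nat; intros n hn. rewrite <- H1 by lia. apply H2; lia.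
Qed.

Lemma inv_cv u a : cv_infty u -> Un_cv (fun n => a / u n) 0.
Proof.
  intros H eps heps. destruct (H (Rabs a / eps + 1)) as [N HN].
  exists N; intros n hn. specialize (HN n hn). unfold R_dist.
  assert (ha := Rabs_pos a).
  assert (hp : 0 < u n) by (assert (0 <= Rabs a / eps) by (apply Rmult_le_pos; [lra|left; apply Rinv_0_lt_compat; lra]); lra).
  rewrite Rminus_0_r. unfold Rdiv. rewrite Rabs_mult, Rabs_inv, (Rabs_right (u n)) by lra.
  apply Rmult_lt_reg_r with (u n); [lra|].
  rewrite Rmult_assoc, Rinv_l by lra. rewrite Rmult_1_r.
  apply Rmult_lt_reg_l with (/ eps); [apply Rinv_0_lt_compat; lra|].
  replace (/ eps * (eps * u n)) with (u n) by (field; lra).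
  replace (/ eps * Rabs a) with (Rabs a / eps) by (unfold Rdiv; ring). lra.
Qed.

Lemma dd_pos r : 0 < dd r.
Proof. destruct (dd_facts r); lra. Qed.

Lemma div_dd_ge s r K : 0 < s -> dd r <= K -> s / K <= s / dd r.
Proof.
  intros hs hK. assert (h := dd_pos r).
  unfold Rdiv. apply Rmult_le_compat_l; [lra|]. apply Rinv_le_contravar; lra.
Qed.

Lemma xs_small (sg : nat -> R) x : cv_infty sg -> ev (fun n => Rabs (x / sg n) < 1).
Proof.
  intro H. destruct (inv_cv sg x H 1 ltac:(lra)) as [N HN]. exists N; intros n hn.
  specialize (HN n hn). unfold R_dist in HN. rewrite Rminus_0_r in HN. exact HN.
Qed.

Lemma crit0 (sg rh w : nat -> R) x : cv_infty w ->
  ev (fun n => rh n < 0 /\ w n <= sg n / dd (rh n)) ->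
  Un_cv (fun n => Phi (cval (sg n) (rh n) x)) 0.
Proof.
  intros Hw Hev. apply Phi_to0.
  apply cvinf_mono with (fun n => w n + - x); [apply cvinf_shift, Hw|].
  apply ev_impl with (1 := Hev). intros n [h1 h2].
  unfold cval. destruct (Rle_dec 0 (rh n)); [lra|]. lra.
Qed.

Lemma crit1 (sg rh w : nat -> R) x : cv_infty w ->
  ev (fun n => 0 <= rh n /\ w n <= sg n / dd (rh n)) ->
  Un_cv (fun n => Phi (cval (sg n) (rh n) x)) 1.
Proof.
  intros Hw Hev. apply Phi_to1.
  apply cvinf_mono with (fun n => w n + x); [apply cvinf_shift, Hw|].
  apply ev_impl with (1 := Hev). intros n [h1 h2].
  unfold cval. destruct (Rle_dec 0 (rh n)); [|lra]. lra.
Qed.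

Lemma fin0 (sg rh : nat -> R) x K : cv_infty sg -> 0 <= K ->
  ev (fun n => 0 < sg n /\ rh n < 0 /\ Rabs (rh n) <= K) ->
  Un_cv (fun n => Phi (cval (sg n) (rh n) x)) 0.
Proof.
  intros Hs hK Hev. apply crit0 with (fun n => / (K + 1) * sg n).
  - apply cvinf_scale; [exact Hs|apply Rinv_0_lt_compat; lra].
  - apply ev_impl with (1 := Hev). intros n (h1 & h2 & h3). split; [exact h2|].
    replace (/ (K + 1) * sg n) with (sg n / (K + 1)) by (unfold Rdiv; ring).
    apply div_dd_ge; [exact h1|]. destruct (dd_facts (rh n)) as (_ & _ & h & _). lra.
Qed.

Lemma fin1 (sg rh : nat -> R) x K : cv_infty sg -> 0 <= K ->
  ev (fun n => 0 < sg n /\ 0 <= rh n /\ Rabs (rh n) <= K) ->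
  Un_cv (fun n => Phi (cval (sg n) (rh n) x)) 1.
Proof.
  intros Hs hK Hev. apply crit1 with (fun n => / (K + 1) * sg n).
  - apply cvinf_scale; [exact Hs|apply Rinv_0_lt_compat; lra].
  - apply ev_impl with (1 := Hev). intros n (h1 & h2 & h3). split; [exact h2|].
    replace (/ (K + 1) * sg n) with (sg n / (K + 1)) by (unfold Rdiv; ring).
    apply div_dd_ge; [exact h1|]. destruct (dd_facts (rh n)) as (_ & _ & h & _). lra.
Qed.

Lemma inf0 (sg et : nat -> R) x : cv_infty sg -> cv_infty (fun n => - et n) ->
  cv_infty (fun n => sg n / - et n) ->
  ev (fun n => 0 < sg n) ->
  Un_cv (fun n => Phi (cval (sg n) (et n + x / sg n) x)) 0.
Proof.
  intros Hs He Hr Hp. apply crit0 with (fun n => / 3 * (sg n / - et n)).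
  - apply cvinf_scale; [exact Hr|lra].
  - apply ev_impl with (1 := ev_and _ _ (ev_and _ _ Hp (xs_small sg x Hs)) (cvinf_gt _ 1 He)).
    intros n [[h1 h2] h3].
    assert (hb := Rle_abs (x / sg n)). assert (hb' := Rle_abs (- (x / sg n))). rewrite Rabs_Ropp in hb'.
    split; [lra|].
    replace (/ 3 * (sg n / - et n)) with (sg n / (3 * - et n)) by (field; lra).
    apply div_dd_ge; [exact h1|].
    destruct (dd_facts (et n + x / sg n)) as (_ & _ & h & _).
    rewrite Rabs_left in h by lra. lra.
Qed.

Lemma inf1 (sg et : nat -> R) x : cv_infty sg -> cv_infty et ->
  cv_infty (fun n => sg n / et n) ->
  ev (fun n => 0 < sg n) ->
  Un_cv (fun n => Phi (cval (sg n) (et n + x / sg n) x)) 1.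
Proof.
  intros Hs He Hr Hp. apply crit1 with (fun n => / 3 * (sg n / et n)).
  - apply cvinf_scale; [exact Hr|lra].
  - apply ev_impl with (1 := ev_and _ _ (ev_and _ _ Hp (xs_small sg x Hs)) (cvinf_gt _ 1 He)).
    intros n [[h1 h2] h3].
    assert (hb := Rle_abs (x / sg n)). assert (hb' := Rle_abs (- (x / sg n))). rewrite Rabs_Ropp in hb'.
    split; [lra|].
    replace (/ 3 * (sg n / et n)) with (sg n / (3 * et n)) by (field; lra).
    apply div_dd_ge; [exact h1|].
    destruct (dd_facts (et n + x / sg n)) as (_ & _ & h & _).
    rewrite Rabs_right in h by lra. lra.
Qed.

Lemma ratio1 (sg et : nat -> R) x : cv_infty (fun n => Rabs (et n)) ->
  ev (fun n => Rabs (x / sg n) < 1) ->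
  Un_cv (fun n => Rabs (et n) / dd (et n + x / sg n)) 1.
Proof.
  intros He Hx eps heps.
  destruct (ev_and _ _ Hx (cvinf_gt _ (1 + 2 / eps) He)) as [N HN].
  exists N; intros n hn. destruct (HN n hn) as [h1 h2]. unfold R_dist.
  set (a := Rabs (et n)) in *. set (dl := x / sg n) in *.
  destruct (dd_facts (et n + dl)) as (hd1 & hd2 & hd3 & _).
  set (d := dd (et n + dl)) in *.
  assert (hr1 : Rabs (et n + dl) <= a + Rabs dl) by apply Rabs_triang.
  assert (hr2 : a <= Rabs (et n + dl) + Rabs dl).
  { unfold a. replace (et n) with ((et n + dl) + - dl) at 1 by ring.
    rewrite <- (Rabs_Ropp dl). apply Rabs_triang. }
  assert (he2 : 0 < 2 / eps) by (unfold Rdiv; apply Rmult_lt_0_compat; [lra|apply Rinv_0_lt_compat; lra]).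
  assert (hk : eps * (2 / eps) = 2) by (field; lra).
  assert (hdpos : 0 < d) by lra.
  assert (hk2 : 2 < eps * d) by nra.
  replace (a / d - 1) with ((a - d) / d) by (field; lra).
  apply Rabs_def1.
  - apply Rmult_lt_reg_r with d; [lra|]. unfold Rdiv. rewrite Rmult_assoc, Rinv_l by lra. lra.
  - apply Rmult_lt_reg_r with d; [lra|]. unfold Rdiv. rewrite Rmult_assoc, Rinv_l by lra. lra.
Qed.

Lemma cv_const c : Un_cv (fun _ => c) c.
Proof. intros eps heps; exists 0%nat; intros; unfold R_dist; rewrite Rminus_eq_0, Rabs_R0; exact heps. Qed.

Lemma p3_pos (sg et : nat -> R) x r : cv_infty sg -> cv_infty et ->
  Un_cv (fun n => sg n / et n) r ->
  Un_cv (fun n => cval (sg n) (et n + x / sg n) x) (x + r).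
Proof.
  intros Hs He Hr.
  assert (Ha : cv_infty (fun n => Rabs (et n))).
  { apply cvinf_mono with et; [exact He|]. exists 0%nat; intros; apply Rle_abs. }
  pose proof (ratio1 sg et x Ha (xs_small sg x Hs)) as H1.
  pose proof (CV_mult _ _ _ _ Hr H1) as H2. rewrite Rmult_1_r in H2.
  pose proof (CV_plus (fun _ => x) _ x r (cv_const x) H2) as H3.
  apply Un_cv_ev with (1 := H3).
  apply ev_impl with (1 := ev_and _ _ (xs_small sg x Hs) (cvinf_gt _ 1 He)).
  intros n [h1 h2]. simpl.
  assert (hb := Rle_abs (x / sg n)). assert (hb' := Rle_abs (- (x / sg n))). rewrite Rabs_Ropp in hb'.
  unfold cval. destruct (Rle_dec 0 (et n + x / sg n)); [|lra].
  rewrite Rabs_right by lra. f_equal. assert (h := dd_pos (et n + x / sg n)). field. lra.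
Qed.

Lemma p3_neg (sg et : nat -> R) x r : cv_infty sg -> cv_infty (fun n => - et n) ->
  Un_cv (fun n => sg n / et n) r ->
  Un_cv (fun n => cval (sg n) (et n + x / sg n) x) (x + r).
Proof.
  intros Hs He Hr.
  assert (Ha : cv_infty (fun n => Rabs (et n))).
  { apply cvinf_mono with (fun n => - et n); [exact He|]. exists 0%nat; intros.
    rewrite <- Rabs_Ropp. apply Rle_abs. }
  pose proof (ratio1 sg et x Ha (xs_small sg x Hs)) as H1.
  pose proof (CV_opp _ _ Hr) as Hr'.
  pose proof (CV_mult _ _ _ _ Hr' H1) as H2. rewrite Rmult_1_r in H2.
  pose proof (CV_minus (fun _ => x) _ x (- r) (cv_const x) H2) as H3.
  replace (x + r) with (x - - r) by ring.
  apply Un_cv_ev with (1 := H3).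
  apply ev_impl with (1 := ev_and _ _ (xs_small sg x Hs) (cvinf_gt _ 1 He)).
  intros n [h1 h2]. simpl. unfold opp_seq.
  assert (hb := Rle_abs (x / sg n)). assert (hb' := Rle_abs (- (x / sg n))). rewrite Rabs_Ropp in hb'.
  unfold cval. destruct (Rle_dec 0 (et n + x / sg n)); [lra|].
  rewrite Rabs_left by lra. f_equal. assert (h := dd_pos (et n + x / sg n)). field. lra.
Qed.

Lemma link (mu th : nat -> R) x : (forall n, (1 <= n)%nat -> 0 < mu n) ->
  ev (fun n => Phi (cval (sqrt (INR n) * mu n) (th n / mu n + x / (sqrt (INR n) * mu n)) x)
             = F_A n (mu n) (th n) x).
Proof.
  intro hp. apply ev_impl with (1 := ev_ge1). intros n hn.
  symmetry. apply F_A_eq; [exact hn|apply hp, hn].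
Qed.

Lemma sg_pos (mu : nat -> R) : (forall n, (1 <= n)%nat -> 0 < mu n) ->
  ev (fun n => 0 < sqrt (INR n) * mu n /\ 0 < mu n /\ 0 < sqrt (INR n)).
Proof.
  intro hp. apply ev_impl with (1 := ev_ge1). intros n hn.
  assert (h1 := hp n hn). assert (h2 := sqrtn_pos n hn). split; [nra|lra].
Qed.

Lemma step_cont nu x : continuity_pt (fun x => if Rle_dec (- nu) x then 1 else 0) x -> x <> - nu.
Proof.
  intros H hx. destruct (H (1/2) ltac:(lra)) as [a [ha Ha]].
  specialize (Ha (x - a / 2)).
  assert (hd : D_x no_cond x (x - a / 2) /\ R_dist (x - a / 2) x < a).
  { split. split; [exact I|lra]. unfold R_dist.
    replace (x - a / 2 - x) with (- (a / 2)) by ring. rewrite Rabs_Ropp, Rabs_right by lra. lra. }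
  specialize (Ha hd). simpl in Ha. unfold R_dist in Ha.
  destruct (Rle_dec (- nu) (x - a / 2)); [lra|]. destruct (Rle_dec (- nu) x); [|lra].
  rewrite Rminus_0_l, Rabs_Ropp, Rabs_R1 in Ha. lra.
Qed.

Lemma conclude (mu th : nat -> R) x L : (forall n, (1 <= n)%nat -> 0 < mu n) ->
  Un_cv (fun n => Phi (cval (sqrt (INR n) * mu n) (th n / mu n + x / (sqrt (INR n) * mu n)) x)) L ->
  Un_cv (fun n => F_A n (mu n) (th n) x) L.
Proof. intros hp H. apply Un_cv_ev with (1 := H). apply link, hp. Qed.

Lemma rho_cv (mu th : nat -> R) x z : cv_infty (fun n => sqrt (INR n) * mu n) ->
  Un_cv (fun n => th n / mu n) z ->
  Un_cv (fun n => th n / mu n + x / (sqrt (INR n) * mu n)) z.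
Proof.
  intros Hs H. pose proof (CV_plus _ _ _ _ H (inv_cv _ x Hs)) as H2.
  rewrite Rplus_0_r in H2. exact H2.
Qed.

Lemma sgrho (mu th : nat -> R) x : (forall n, (1 <= n)%nat -> 0 < mu n) ->
  ev (fun n => 0 < sqrt (INR n) * mu n /\
    (sqrt (INR n) * mu n) * (th n / mu n + x / (sqrt (INR n) * mu n)) = sqrt (INR n) * th n + x).
Proof.
  intro hp. apply ev_impl with (1 := sg_pos mu hp). intros n (h1 & h2 & h3).
  split; [exact h1|]. field. lra.
Qed.

Lemma theorem3_aux (mu : nat -> R)
  (hmu_pos : forall n : nat, (1 <= n)%nat -> 0 < mu n)
  (hmu0 : Un_cv mu 0)
  (hmuinf : cv_infty (fun n => sqrt (INR n) * mu n)) :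
  (forall (theta : nat -> R) (nu : R),
     Un_cv (fun n => theta n / mu n) 0 ->
     Un_cv (fun n => sqrt (INR n) * theta n) nu ->
     weak_conv (fun n => F_A n (mu n) (theta n))
               (fun x => if Rle_dec (- nu) x then 1 else 0)) /\
  (forall theta : nat -> R,
     ((exists zeta, zeta < 0 /\ Un_cv (fun n => theta n / mu n) zeta) \/
      (Un_cv (fun n => theta n / mu n) 0 /\
       cv_infty (fun n => - (sqrt (INR n) * theta n))) \/
      (cv_infty (fun n => - (theta n / mu n)) /\
       cv_infty (fun n => - (sqrt (INR n) * mu n ^ 2 / theta n)))) ->
     forall x : R, Un_cv (fun n => F_A n (mu n) (theta n) x) 0) /\
  (forall theta : nat -> R,
     ((exists zeta, 0 < zeta /\ Un_cv (fun n => theta n / mu n) zeta) \/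
      (Un_cv (fun n => theta n / mu n) 0 /\
       cv_infty (fun n => sqrt (INR n) * theta n)) \/
      (cv_infty (fun n => theta n / mu n) /\
       cv_infty (fun n => sqrt (INR n) * mu n ^ 2 / theta n))) ->
     forall x : R, Un_cv (fun n => F_A n (mu n) (theta n) x) 1) /\
  (forall (theta : nat -> R) (r : R),
     (cv_infty (fun n => theta n / mu n) \/
      cv_infty (fun n => - (theta n / mu n))) ->
     Un_cv (fun n => sqrt (INR n) * mu n ^ 2 / theta n) r ->
     weak_conv (fun n => F_A n (mu n) (theta n)) (fun x => Phi (x + r))).
Proof.
  split; [|split; [|split]].
  -
    intros theta nu H0 Hnu x Hc. apply step_cont in Hc.
    apply conclude; [exact hmu_pos|].
    pose proof (rho_cv mu theta x 0 hmuinf H0) as Hr.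
    pose proof (CV_plus _ (fun _ => x) _ _ Hnu (cv_const x)) as Hsx.
    destruct (Rlt_or_le x (- nu)) as [hx|hx].
    + destruct (Rle_dec (- nu) x) as [hh|hh]; [lra|].
      apply fin0 with 1; [exact hmuinf|lra|].
      apply ev_impl with (1 := ev_and _ _ (ev_and _ _ (sgrho mu theta x hmu_pos) (cv_abs_le _ _ Hr))
        (cv_lt _ _ 0 Hsx ltac:(lra))).
      intros n [[[h1 h2] h3] h4]. simpl in h4. rewrite Rabs_R0 in h3.
      split; [exact h1|split; [|lra]]. rewrite <- h2 in h4.
      destruct (Rlt_or_le (theta n / mu n + x / (sqrt (INR n) * mu n)) 0); [assumption|nra].
    + destruct (Rle_dec (- nu) x) as [hh|hh]; [|lra].
      assert (hx' : - nu < x) by (destruct hx; [lra|exfalso; apply Hc; auto]).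
      apply fin1 with 1; [exact hmuinf|lra|].
      apply ev_impl with (1 := ev_and _ _ (ev_and _ _ (sgrho mu theta x hmu_pos) (cv_abs_le _ _ Hr))
        (cv_gt _ _ 0 Hsx ltac:(lra))).
      intros n [[[h1 h2] h3] h4]. simpl in h4. rewrite Rabs_R0 in h3.
      split; [exact h1|split; [|lra]]. rewrite <- h2 in h4. nra.
  -
    intros theta Hcase x. apply conclude; [exact hmu_pos|].
    destruct Hcase as [[z [hz Hz]]|[[H0 Hi]|[Hi1 Hi2]]].
    + pose proof (rho_cv mu theta x z hmuinf Hz) as Hr.
      apply fin0 with (Rabs z + 1); [exact hmuinf|assert (h := Rabs_pos z); lra|].
      apply ev_impl with (1 := ev_and _ _ (ev_and _ _ (sg_pos mu hmu_pos) (cv_abs_le _ _ Hr))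
        (cv_lt _ _ 0 Hr hz)).
      intros n [[[h1 _] h3] h4]. split; [exact h1|split; assumption].
    + pose proof (rho_cv mu theta x 0 hmuinf H0) as Hr.
      apply fin0 with 1; [exact hmuinf|lra|].
      apply ev_impl with (1 := ev_and _ _ (ev_and _ _ (sgrho mu theta x hmu_pos) (cv_abs_le _ _ Hr))
        (cvinf_gt _ x Hi)).
      intros n [[[h1 h2] h3] h4]. rewrite Rabs_R0 in h3.
      split; [exact h1|split; [|lra]].
      destruct (Rlt_or_le (theta n / mu n + x / (sqrt (INR n) * mu n)) 0); [assumption|nra].
    + apply inf0; [exact hmuinf|exact Hi1| |].
      * apply cvinf_mono with (1 := Hi2).
        apply ev_impl with (1 := ev_and _ _ (sg_pos mu hmu_pos) (cvinf_gt _ 0 Hi1)).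
        intros n [(h1 & h2 & h3) h4]. right.
        assert (theta n <> 0) by (intro e; rewrite e in h4; unfold Rdiv in h4; lra).
        field; repeat split; try assumption; lra.
      * apply ev_impl with (1 := sg_pos mu hmu_pos). intros n [h _]; exact h.
  -
    intros theta Hcase x. apply conclude; [exact hmu_pos|].
    destruct Hcase as [[z [hz Hz]]|[[H0 Hi]|[Hi1 Hi2]]].
    + pose proof (rho_cv mu theta x z hmuinf Hz) as Hr.
      apply fin1 with (Rabs z + 1); [exact hmuinf|assert (h := Rabs_pos z); lra|].
      apply ev_impl with (1 := ev_and _ _ (ev_and _ _ (sg_pos mu hmu_pos) (cv_abs_le _ _ Hr))
        (cv_gt _ _ 0 Hr hz)).
      intros n [[[h1 _] h3] h4]. split; [exact h1|split; [lra|assumption]].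
    + pose proof (rho_cv mu theta x 0 hmuinf H0) as Hr.
      apply fin1 with 1; [exact hmuinf|lra|].
      apply ev_impl with (1 := ev_and _ _ (ev_and _ _ (sgrho mu theta x hmu_pos) (cv_abs_le _ _ Hr))
        (cvinf_gt _ (- x) Hi)).
      intros n [[[h1 h2] h3] h4]. rewrite Rabs_R0 in h3.
      split; [exact h1|split; [|lra]]. nra.
    + apply inf1; [exact hmuinf|exact Hi1| |].
      * apply cvinf_mono with (1 := Hi2).
        apply ev_impl with (1 := ev_and _ _ (sg_pos mu hmu_pos) (cvinf_gt _ 0 Hi1)).
        intros n [(h1 & h2 & h3) h4]. right.
        assert (theta n <> 0) by (intro e; rewrite e in h4; unfold Rdiv in h4; lra).
        field; repeat split; try assumption; lra.
      * apply ev_impl with (1 := sg_pos mu hmu_pos). intros n [h _]; exact h.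
  -
    intros theta r Hcase Hr x _. apply conclude; [exact hmu_pos|].
    apply Phi_cv.
    assert (Hr' : forall (P : nat -> Prop), ev P -> (forall n, P n -> theta n <> 0) ->
      Un_cv (fun n => sqrt (INR n) * mu n / (theta n / mu n)) r).
    { intros P HP HP0. apply Un_cv_ev with (1 := Hr).
      apply ev_impl with (1 := ev_and _ _ (sg_pos mu hmu_pos) HP).
      intros n [(h1 & h2 & h3) h4]. specialize (HP0 n h4). field. split; [lra|assumption]. }
    destruct Hcase as [Hi|Hi].
    + apply p3_pos; [exact hmuinf|exact Hi|].
      apply Hr' with (1 := ev_and _ _ (sg_pos mu hmu_pos) (cvinf_gt _ 0 Hi)).
      intros n [_ h] e. rewrite e in h. unfold Rdiv in h. lra.
    + apply p3_neg; [exact hmuinf|exact Hi|].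
      apply Hr' with (1 := ev_and _ _ (sg_pos mu hmu_pos) (cvinf_gt _ 0 Hi)).
      intros n [_ h] e. rewrite e in h. unfold Rdiv in h. lra.
Qed.

End ST.

Theorem theorem3 (mu : nat -> R)
  (hmu_pos : forall n : nat, (1 <= n)%nat -> 0 < mu n)
  (hmu0 : Un_cv mu 0)
  (hmuinf : cv_infty (fun n => sqrt (INR n) * mu n)) :
  (* Part 1 *)
  (forall (theta : nat -> R) (nu : R),
     Un_cv (fun n => theta n / mu n) 0 ->
     Un_cv (fun n => sqrt (INR n) * theta n) nu ->
     weak_conv (fun n => F_A n (mu n) (theta n))
               (fun x => if Rle_dec (- nu) x then 1 else 0)) /\
  (* Part 2, convergence to 0 *)
  (forall theta : nat -> R,
     ((exists zeta, zeta < 0 /\ Un_cv (fun n => theta n / mu n) zeta) \/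
      (Un_cv (fun n => theta n / mu n) 0 /\
       cv_infty (fun n => - (sqrt (INR n) * theta n))) \/
      (cv_infty (fun n => - (theta n / mu n)) /\
       cv_infty (fun n => - (sqrt (INR n) * mu n ^ 2 / theta n)))) ->
     forall x : R, Un_cv (fun n => F_A n (mu n) (theta n) x) 0) /\
  (* Part 2, convergence to 1 *)
  (forall theta : nat -> R,
     ((exists zeta, 0 < zeta /\ Un_cv (fun n => theta n / mu n) zeta) \/
      (Un_cv (fun n => theta n / mu n) 0 /\
       cv_infty (fun n => sqrt (INR n) * theta n)) \/
      (cv_infty (fun n => theta n / mu n) /\
       cv_infty (fun n => sqrt (INR n) * mu n ^ 2 / theta n))) ->
     forall x : R, Un_cv (fun n => F_A n (mu n) (theta n) x) 1) /\
  (* Part 3 *)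
  (forall (theta : nat -> R) (r : R),
     (cv_infty (fun n => theta n / mu n) \/
      cv_infty (fun n => - (theta n / mu n))) ->
     Un_cv (fun n => sqrt (INR n) * mu n ^ 2 / theta n) r ->
     weak_conv (fun n => F_A n (mu n) (theta n)) (fun x => Phi (x + r))).
Proof. exact (ST.theorem3_aux mu hmu_pos hmu0 hmuinf). Qed.
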